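(* Let $N$ be a set of $n$ elements, $v:2^N\to\mathbb{R}_+$ a monotone submodular function with $v(\emptyset)=0$, and $r(S)=\sum_{i\in S}v(\{i\}\mid S\setminus\{i\})$. Let $s>0$ be such that $k=s\cdot H_n$ is a positive integer, where $H_n=\sum_{j=1}^n\frac1j$, and let $S_1,\dots,S_k$ be independent random sets, each sampled by: pick a size $m\in\{1,\dots,n\}$ with probability $(m H_n)^{-1}$, then pick a uniformly random subset of $N$ of size $m$. Then $$\Pr\Big[\max_{i}r(S_i)\ge\frac{v(N)}{2H_n}\Big]\ge1-e^{-s/2}.$$
   Context: Marginal value: $v(\{i\}\mid T)=v(T\cup\{i\})-v(T)$; submodular means $v(S\cup T)+v(S\cap T)\le v(S)+v(T)$ for all $S,T$. *)

(* Defs.v *)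
From HB Require Import structures.
From mathcomp Require Import all_boot all_order all_algebra.
From mathcomp Require Import reals.
From mathcomp Require Import sequences exp.
Set Implicit Arguments. Unset Strict Implicit. Unset Printing Implicit Defensive.
Import Order.TTheory GRing.Theory Num.Theory.
Local Open Scope ring_scope.

Section Defs.
Variables (R : realType) (T : finType).

Definition Hnum (n : nat) : R := \sum_(j < n) ((j.+1)%:R)^-1.

Definition marg (v : {set T} -> R) (i : T) (S : {set T}) : R := v (i |: S) - v S.

Definition rfun (v : {set T} -> R) (S : {set T}) : R :=
  \sum_(i in S) marg v i (S :\ i).

Definition monotone_set (v : {set T} -> R) : Prop :=
  forall S U : {set T}, S \subset U -> v S <= v U.

Definition submodular (v : {set T} -> R) : Prop :=
  forall S U : {set T}, v (S :|: U) + v (S :&: U) <= v S + v U.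

(* Probability that the sampling procedure outputs the set S:
   pick m in {1..n} with prob (m H_n)^{-1}, then a uniform subset of size m. *)
Definition sample_prob (S : {set T}) : R :=
  let n := #|T| in
  \sum_(1 <= m < n.+1)
     ((m%:R * Hnum n)^-1 * (if #|S| == m then ('C(n, m)%:R)^-1 else 0)).

Definition prob_indep (k : nat) (E : {ffun 'I_k -> {set T}} -> bool) : R :=
  \sum_(f : {ffun 'I_k -> {set T}} | E f) \prod_(i < k) sample_prob (f i).

End Defs.

(* Main.v *)
Require Import Defs.
From HB Require Import structures.
From mathcomp Require Import all_boot all_order all_algebra.
From mathcomp Require Import reals.
From mathcomp Require Import sequences exp.
From mathcomp Require Import lra ring.
Import Order.TTheory GRing.Theory Num.Theory.
Local Open Scope ring_scope.

Section Aux.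
Variables (R : realType) (T : finType) (v : {set T} -> R).

Lemma rfunE S : rfun v S = \sum_(i in S) (v S - v (S :\ i)).
Proof. by apply: eq_bigr => i iS; rewrite /marg setD1K. Qed.

Lemma rfunE2 S : rfun v S = #|S|%:R * v S - \sum_(i in S) v (S :\ i).
Proof. by rewrite rfunE sumrB sumr_const mulr_natl. Qed.

Lemma rfun_ge0 S : monotone_set v -> 0 <= rfun v S.
Proof.
move=> mon; apply: sumr_ge0 => i _; rewrite /marg subr_ge0; apply: mon.
exact: subsetUr.
Qed.

Lemma rfun_le S : submodular v -> v set0 = 0 -> rfun v S <= v S.
Proof.
move=> sub v0.
move: {2}#|S| (erefl #|S|) => n; elim: n S => [|n IH] S cS.
  move/eqP: cS; rewrite cards_eq0 => /eqP ->.
  by rewrite rfunE big_set0 v0.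
have [j jS] : exists j, j \in S.
  by apply/set0Pn; rewrite -card_gt0 cS.
have cS' : #|S :\ j| = n by move: (cardsD1 j S); rewrite jS cS add1n => -[].
rewrite rfunE (bigD1 j) //=.
apply: (le_trans _ (_ : v S - v (S :\ j) + rfun v (S :\ j) <= _)); last first.
  by rewrite -[X in _ <= X](subrK (v (S :\ j))) lerD2l IH.
rewrite lerD2l rfunE.
rewrite [X in _ <= X](eq_bigl (fun i => (i \in S) && (i != j))); last first.
  by move=> i; rewrite !inE andbC.
apply: ler_sum => i /andP [iS ij].
have := sub (S :\ i) (S :\ j).
have -> : (S :\ i) :|: (S :\ j) = S.
  apply/setP => x; rewrite !inE.
  case: (eqVneq x i) => [->|xi] /=; last by case: (x \in S); rewrite ?andbF.
  idtac.
  by rewrite ij.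
have -> : (S :\ i) :&: (S :\ j) = (S :\ j) :\ i.
  by apply/setP => x; rewrite !inE; case: (x != i); case: (x != j); case: (x \in S).
move=> h; lra.
Qed.


Definition A (j : nat) : R := \sum_(U : {set T} | #|U| == j) v U.

Lemma perI (i : T) (j : nat) :
  \sum_(S : {set T} | (#|S| == j.+1) && (i \in S)) v (S :\ i) =
  \sum_(U : {set T} | (#|U| == j) && (i \notin U)) v U.
Proof.
rewrite (reindex_onto (fun U => i |: U) (fun S => S :\ i)) /=; last first.
  by move=> S /andP [_ iS]; rewrite setD1K.
apply: eq_big => U; last by move=> /andP [_ /eqP ->].
case: (boolP (i \in U)) => iU /=.
  rewrite andbF; apply/negbTE; rewrite negb_and; apply/orP; right.
  apply/negP => /eqP E; have : i \in (i |: U) :\ i by rewrite E.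
  by rewrite !inE eqxx.
by rewrite setU1K // eqxx cardsU1 iU setU11 andbT andbT add1n eqSS.
Qed.

Lemma dc (j : nat) :
  \sum_(S : {set T} | #|S| == j.+1) \sum_(i in S) v (S :\ i) =
  (#|T| - j)%:R * A j.
Proof.
transitivity (\sum_(S : {set T}) \sum_(i : T)
   (if (#|S| == j.+1) && (i \in S) then v (S :\ i) else 0)).
  rewrite big_mkcond; apply: eq_bigr => S _.
  case: (#|S| == j.+1) => /=; last by rewrite big1.
  by rewrite big_mkcond.
rewrite exchange_big /=.
transitivity (\sum_(i : T) \sum_(U : {set T})
   (if (#|U| == j) && (i \notin U) then v U else 0)).
  by apply: eq_bigr => i _; rewrite -!big_mkcond perI.
rewrite exchange_big /= /A mulr_sumr [in RHS]big_mkcond; apply: eq_bigr => U _.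
case: (eqVneq #|U| j) => cU /=; last by rewrite big1.
rewrite -big_mkcond /=.
rewrite (eq_bigl (fun i => i \in ~: U)); last by move=> i; rewrite inE.
rewrite sumr_const mulr_natl -cU; congr (_ *+ _).
by rewrite -(cardsC U) addKn.
Qed.

Lemma sumr_card (j : nat) :
  \sum_(S : {set T} | #|S| == j.+1) rfun v S = j.+1%:R * A j.+1 - (#|T| - j)%:R * A j.
Proof.
rewrite -dc /A mulr_sumr -sumrB; apply: eq_bigr => S /eqP cS.
by rewrite rfunE2 cS.
Qed.


Let n := #|T|.
Let H := Hnum R n.

Lemma sample_probE (S : {set T}) : sample_prob R S =
  \sum_(j < n) ((j.+1%:R * H)^-1 * (if #|S| == j.+1 then ('C(n, j.+1)%:R)^-1 else 0)).
Proof.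
rewrite /sample_prob -/n -/H -{1}[1%N]/(0+1)%N big_addn subn1 /= big_mkord.
by apply: eq_bigr => j _; rewrite addn1.
Qed.

Lemma H_ge0 : 0 <= H.
Proof. by apply: sumr_ge0 => j _; rewrite invr_ge0. Qed.

Lemma sp_ge0 (S : {set T}) : 0 <= sample_prob R S.
Proof.
rewrite sample_probE; apply: sumr_ge0 => j _; apply: mulr_ge0.
  by rewrite invr_ge0 mulr_ge0 // H_ge0.
by case: ifP => _ //; rewrite invr_ge0.
Qed.

Lemma sp_sum (g : {set T} -> R) :
  \sum_(S : {set T}) sample_prob R S * g S =
  \sum_(j < n) (((j.+1%:R * H)^-1 * ('C(n, j.+1)%:R)^-1) *
                \sum_(S : {set T} | #|S| == j.+1) g S).
Proof.
under eq_bigr => S _ do rewrite sample_probE [_ * g S]mulr_suml.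
rewrite exchange_big /=; apply: eq_bigr => j _.
rewrite [in RHS]big_mkcond [RHS]mulr_sumr; apply: eq_bigr => S _.
by case: ifP => _; rewrite ?mulr0 ?mul0r // mulrA.
Qed.

Lemma sp_total : 0 < H -> \sum_(S : {set T}) sample_prob R S = 1.
Proof.
move=> Hp.
transitivity (\sum_(S : {set T}) sample_prob R S * 1); first by apply: eq_bigr => S _; rewrite mulr1.
rewrite sp_sum.
transitivity (\sum_(j < n) H^-1 * (j.+1%:R)^-1).
  apply: eq_bigr => j _.
  rewrite (eq_bigl (fun S : {set T} => S \in [set S : {set T} | #|S| == j.+1])); last first.
    by move=> S; rewrite inE.
  rewrite sumr_const card_draws -/n.
  have c0 : ('C(n, j.+1)%:R : R) != 0 by rewrite pnatr_eq0 -lt0n bin_gt0.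
  by rewrite divfK // invfM mulrC.
rewrite -mulr_sumr -/(Hnum R n) -/H mulVf //; exact: lt0r_neq0.
Qed.

Lemma A_n : A n = v setT.
Proof.
rewrite /A (eq_bigl (fun U => U == setT)) ?big_pred1_eq // => U.
by rewrite eqEcard subsetT cardsT /= eqn_leq max_card.
Qed.

Lemma A_0 : v set0 = 0 -> A 0 = 0.
Proof.
move=> v0; rewrite /A (eq_bigl (fun U => U == set0)) ?big_pred1_eq // => U.
by rewrite cards_eq0.
Qed.

Lemma expect : 0 < H -> v set0 = 0 ->
  \sum_(S : {set T}) sample_prob R S * rfun v S = v setT / H.
Proof.
move=> Hp v0; rewrite sp_sum.
pose a j := A j / ('C(n, j)%:R).
transitivity (\sum_(j < n) H^-1 * (a j.+1 - a j)).
  apply: eq_bigr => -[j jn] _ /=; rewrite sumr_card -/n /a.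
  have c1 : ('C(n, j.+1)%:R : R) != 0 by rewrite pnatr_eq0 -lt0n bin_gt0.
  have c0 : ('C(n, j)%:R : R) != 0 by rewrite pnatr_eq0 -lt0n bin_gt0 ltnW.
  have j0 : (j.+1%:R : R) != 0 by rewrite pnatr_eq0.
  have H0 : H != 0 by exact: lt0r_neq0.
  have hd : ((n - j)%:R : R) = j.+1%:R * 'C(n, j.+1)%:R / 'C(n, j)%:R.
    by rewrite -natrM mul_bin_left natrM mulfK.
  rewrite hd; field; rewrite ?c0 ?c1 ?j0 ?H0 //= -(natrD R 1 j) pnatr_eq0 add1n //.
transitivity (H^-1 * \sum_(j < n) (a j.+1 - a j)); first by rewrite mulr_sumr.
rewrite -(big_mkord xpredT (fun j => a j.+1 - a j)) telescope_sumr // /a.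
by rewrite /a A_n A_0 // binn bin0 !divr1 subr0 mulrC.
Qed.

End Aux.

Lemma indep_forall (R : realType) (T : finType) (k : nat) (B : pred {set T}) :
  \sum_(f : {ffun 'I_k -> {set T}} | [forall i, B (f i)]) \prod_(i < k) sample_prob R (f i)
  = (\sum_(S : {set T} | B S) sample_prob R S) ^+ k.
Proof.
rewrite -[in RHS](card_ord k) -prodr_const.
under [RHS]eq_bigr => i _ do rewrite big_mkcond.
rewrite bigA_distr_bigA /= [LHS]big_mkcond; apply: eq_bigr => f _.
case: ifP => [/forallP Hf|].
  by apply: eq_bigr => i _; rewrite Hf.
move/negbT; rewrite negb_forall => /existsP [i Hi].
by rewrite (bigD1 i) //= (negbTE Hi) mul0r.
Qed.

Theorem mainTheorem17 (R : realType) (T : finType) (v : {set T} -> R)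
  (s : R) (k : nat) :
  (forall S, 0 <= v S) ->
  monotone_set v -> submodular v -> v set0 = 0 ->
  0 < s -> (0 < k)%N -> k%:R = s * Hnum R #|T| ->
  prob_indep R (fun f : {ffun 'I_k -> {set T}} =>
      [exists i, v [set: T] / (2 * Hnum R #|T|) <= rfun v (f i)])
  >= 1 - expR (- (s / 2)).
Proof.
move=> vge0 mon sub v0 s0 k0 kE.
set H := Hnum R #|T|.
have Hp : 0 < H.
  rewrite lt_def H_ge0 andbT; apply/eqP => H0.
  by move: kE; rewrite -/H H0 mulr0 => /eqP; rewrite pnatr_eq0 => /eqP k00; by rewrite k00 in k0.
have tot : \sum_(S : {set T} | predT S) sample_prob R S = 1 by exact: sp_total.
have totk : \sum_(f : {ffun 'I_k -> {set T}}) \prod_(i < k) sample_prob R (f i) = 1.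
  rewrite (eq_bigl (fun f : {ffun 'I_k -> {set T}} => [forall i, predT (f i)])).
    by rewrite indep_forall tot expr1n.
  by move=> f; apply/esym/forallP.
set vN := v [set: T].
have [vN0|vNp] := eqVneq vN 0.
  rewrite /prob_indep (eq_bigl predT) ?totk.
    by rewrite lerBlDr lerDl ltW // expR_gt0.
  move=> f /=; apply/existsP; exists (Ordinal k0).
  by rewrite vN0 mul0r rfun_ge0.
have vNp' : 0 < vN by rewrite lt_def vNp vge0.
pose bad := fun S : {set T} => rfun v S < vN / (2 * H).
pose q := \sum_(S : {set T} | bad S) sample_prob R S.
have q0 : 0 <= q by apply: sumr_ge0 => S _; exact: sp_ge0.
have good1 : \sum_(S : {set T} | ~~ bad S) sample_prob R S = 1 - q.
  by rewrite -tot [in RHS](bigID bad) /= addrC addrK.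
have q1 : 0 <= 1 - q by rewrite -good1; apply: sumr_ge0 => S _; exact: sp_ge0.
have Eb : vN / H <= q * (vN / (2 * H)) + (1 - q) * vN.
  rewrite -(@expect R T v Hp v0); rewrite -/H.
  rewrite (bigID bad) /=; apply: lerD.
    rewrite /q mulr_suml; apply: ler_sum => S bS.
    by apply: ler_wpM2l; [exact: sp_ge0 | exact: ltW].
  rewrite -good1 mulr_suml; apply: ler_sum => S _.
  apply: ler_wpM2l; first exact: sp_ge0.
  apply: (le_trans (@rfun_le R T v S sub v0)); apply: mon; exact: subsetT.
have qle : q <= 1 - (2 * H)^-1.
  have h1 : (2 * H)^-1 * vN <= (1 - q) * vN.
    have e1 : vN / H = 2 * ((2 * H)^-1 * vN).
      by field; rewrite ?lt0r_neq0.
    have e2 : q * (vN / (2 * H)) = q * ((2 * H)^-1 * vN) by rewrite [vN / _]mulrC.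
    rewrite e1 e2 in Eb.
    have cp : 0 < (2 * H)^-1 * vN by rewrite mulr_gt0 // invr_gt0 mulr_gt0.
    move: cp Eb q1; set c := (2 * H)^-1 * vN => cp Eb q1'.
    nra.
  by move: h1; rewrite ler_pM2r // lerBrDl addrC -lerBrDl.
have ex : 1 - (2 * H)^-1 <= expR (- (2 * H)^-1) by exact: (@expR_ge1Dx R (- (2 * H)^-1)).
have qk : q ^+ k <= expR (- (s / 2)).
  apply: (le_trans (lerXn2r k _ _ (le_trans qle ex))); rewrite ?nnegrE ?expR_ge0 //.
  rewrite -expRM_natl; rewrite le_eqVlt; apply/orP; left; apply/eqP; congr expR.
  rewrite kE -/H; field; exact: lt0r_neq0.
rewrite /prob_indep.
set E := (fun f : {ffun 'I_k -> {set T}} => [exists i, vN / (2 * H) <= rfun v (f i)]).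
rewrite (bigID E) /= in totk.
have hnot : \sum_(f : {ffun 'I_k -> {set T}} | ~~ E f) \prod_(i < k) sample_prob R (f i)
    = q ^+ k.
  rewrite /q -(@indep_forall R T k bad).
  apply: eq_bigl => f; rewrite /E negb_exists; apply: eq_forallb => i.
  by rewrite /bad ltNge.
have -> : \sum_(f : {ffun 'I_k -> {set T}} | E f) \prod_(i < k) sample_prob R (f i)
          = 1 - q ^+ k.
  apply/eqP; rewrite eq_sym subr_eq -hnot; apply/eqP; exact/esym/totk.
by rewrite lerB.
Qed.
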